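(* Let $E=\frac{1}{2(n-1)}\sum_{k=1}^np_k\frac{\partial}{\partial p_k}$, regarded as a vector field on the orbit space $\mathbb{C}^n/B_n$. Then $\mathcal{L}_Eg=(d-1)g$ with $d=1-\frac{2}{n-1}$, where $g$ is the contravariant metric with components $g^{ij}(u)=\sum_{k,l}\frac{1-\delta^{kl}}{p_kp_l}\frac{\partial u_i}{\partial p_k}\frac{\partial u_j}{\partial p_l}$ in the coordinates $u_1,\dots,u_n$.
   Context: $n\ge2$. $B_n$ acts on $\mathbb{C}^n$ (coordinates $p_1,\dots,p_n$) by permutations and sign changes of coordinates. $u_k=\sum_{1\le i_1<\dots<i_k\le n}p_{i_1}^2\cdots p_{i_k}^2$ ($k=1,\dots,n$) are basic invariants serving as coordinates on the orbit space; $g^{ij}(u)$ is a polynomial in $u$. $\mathcal{L}$ denotes the Lie derivative (here of a contravariant symmetric 2-tensor). *)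

(* Defs.v *)
From HB Require Import structures.
From mathcomp Require Import all_boot all_order all_algebra.
From mathcomp Require Import mpoly.
Set Implicit Arguments. Unset Strict Implicit. Unset Printing Implicit Defensive.
Import Order.TTheory GRing.Theory Num.Theory.
Local Open Scope ring_scope.

Section B_n_orbit_space.
Variables (n : nat) (R : fieldType).

(* Basic invariant u_{i+1} (index i : 'I_n stands for u_{i+1}):
   u_k = sum_{i_1<...<i_k} p_{i_1}^2 ... p_{i_k}^2, as a polynomial in p. *)
Definition ucoord (i : 'I_n) : {mpoly R[n]} :=
  \sum_(h : {set 'I_n} | #|h| == i.+1) \prod_(k in h) ('X_k) ^+ 2.

Definition uvec (p : 'I_n -> R) : 'I_n -> R := fun i => (ucoord i).@[p].

Definition Ep (f : {mpoly R[n]}) : {mpoly R[n]} :=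
  (2%:R * (n.-1)%:R)^-1 *: \sum_(k < n) ('X_k * mderiv k f).

Definition gexpr (p : 'I_n -> R) (i j : 'I_n) : R :=
  \sum_(k < n) \sum_(l < n)
     (1 - (k == l)%:R) / (p k * p l)
       * (mderiv k (ucoord i)).@[p] * (mderiv l (ucoord j)).@[p].

(* Lie derivative of a contravariant symmetric 2-tensor G along a vector field F,
   both given by polynomial components in the coordinates u:
   (L_F G)^{ij} = F^k d_k G^{ij} - G^{kj} d_k F^i - G^{ik} d_k F^j. *)
Definition lie_deriv2 (F : 'I_n -> {mpoly R[n]}) (G : 'I_n -> 'I_n -> {mpoly R[n]})
  (i j : 'I_n) : {mpoly R[n]} :=
  \sum_(k < n) (F k * mderiv k (G i j) - G k j * mderiv k (F i)
                - G i k * mderiv k (F j)).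

End B_n_orbit_space.

(* Main.v *)
Require Import Defs.
From HB Require Import structures.
From mathcomp Require Import all_boot all_order all_algebra.
From mathcomp Require Import mpoly.
Import Order.TTheory GRing.Theory Num.Theory.
Local Open Scope ring_scope.
From mathcomp Require Import ring.

Definition homd {R : nzRingType} {n} d (p : {mpoly R[n]}) :=
  forall m, m \in msupp p -> mdeg m = d.

Lemma eval_scale (R : comNzRingType) n (p : {mpoly R[n]}) d s x :
  homd d p -> p.@[fun k => s * x k] = s ^+ d * p.@[x].
Proof.
move=> H; rewrite !mevalE mulr_sumr big_seq [RHS]big_seq.
apply: eq_bigr => m Hm.
under eq_bigr => i _ do rewrite exprMn.
rewrite big_split /= prodrXr -mdegE H // mulrCA.
done.
Qed.

Lemma homd_deriv (R : nzRingType) n d (p : {mpoly R[n]}) k :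
  homd d p -> homd d.-1 (mderiv k p).
Proof.
move=> H m Hm0.
have Hm : (mderiv k p)@_m != 0 by rewrite mcoeff_eq0 Hm0.
rewrite mcoeff_mderiv in Hm.
have : (m + U_(k))%MM \in msupp p.
  apply/negPn; rewrite -mcoeff_eq0; apply/negP => /eqP E; move: Hm; rewrite E mul0rn.
  by rewrite eqxx.
by move/H; rewrite mdegD mdeg1 addn1 => <-.
Qed.

Lemma ucoord_homd (R : fieldType) n (i : 'I_n) : homd (2 * i.+1) (ucoord R i).
Proof.
move=> m; rewrite /ucoord.
have -> : \sum_(h : {set 'I_n} | #|h| == i.+1) \prod_(k in h) ('X_k : {mpoly R[n]}) ^+ 2
   = \sum_(h : {set 'I_n} | #|h| == i.+1) 'X_[\sum_(k in h) (U_(k) *+ 2)%MM].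
  apply: eq_bigr => h _; rewrite -mprodXE; apply: eq_bigr => k _.
  by rewrite mpolyXn.
have : \sum_(h : {set 'I_n} | #|h| == i.+1) ('X_[\sum_(k in h) (U_(k) *+ 2)%MM] : {mpoly R[n]})
   \is (2 * i.+1).-homog.
  apply: rpred_sum => h /eqP Hh; rewrite dhomogX.
rewrite /= mdeg_sum.
  under eq_bigr => k _ do rewrite mdegMn mdeg1.
  by rewrite sum_nat_const Hh mul1n mulnC.
by move/dhomogP => H /H.
Qed.

Lemma ucoord_eval (R : fieldType) n (i : 'I_n) (x : 'I_n -> R) :
  (ucoord R i).@[x] = (mesym n R i.+1).@[fun k => x k ^+ 2].
Proof.
rewrite /ucoord mesymE !(raddf_sum (meval _)); apply: eq_bigr => h _.

rewrite /= (rmorph_prod (meval x)) mevalX /= [LHS]big_mkcond /=; apply: eq_bigr => k _.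
rewrite mnmE; case: (k \in h); by rewrite ?(rmorphXn (meval x)) /= ?mevalXU ?expr1 ?expr0.
Qed.

Lemma unlift_widen n (i : 'I_n) : unlift ord_max (widen_ord (leqnSn n) i) = Some i.
Proof.
have -> : widen_ord (leqnSn n) i = lift ord_max i.
  by apply/val_inj; rewrite /= /bump leqNgt ltn_ord.
by rewrite liftK.
Qed.

Lemma mpoly_vanish (R : numDomainType) n (p : {mpoly R[n]}) :
  (forall x, p.@[x] = 0) -> p = 0.
Proof.
elim: n p => [|n IH] p H.
  move: (H (fun _ => 0)); rewrite [p]nvar0_mpolyC mevalC => ->.
  by rewrite mpolyC0.
pose res (m : 'X_{1..n.+1}) : 'X_{1..n} := [multinom m (lift ord_max i) | i < n].
pose K := msize p.
pose c (j : nat) : {mpoly R[n]} :=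
  \sum_(m <- msupp p | m ord_max == j) p@_m *: 'X_[res m].
pose ext (x : 'I_n -> R) (t : R) :=
  fun i : 'I_n.+1 => if unlift ord_max i is Some k then x k else t.
have ltK m : m \in msupp p -> (m ord_max < K)%N.
  move=> /msize_mdeg_lt; apply: leq_ltn_trans.
  by rewrite mdegE (bigD1 ord_max) //= leq_addr.
have C1 x t : p.@[ext x t] = \sum_(j < K) (c j).@[x] * t ^+ j.
  have E j : (c j).@[x] = \sum_(m <- msupp p | m ord_max == j) (p@_m *: 'X_[res m]).@[x].
    by rewrite /c (raddf_sum (meval x)).
  rewrite mevalE.
  under [RHS]eq_bigr => j _ do rewrite E mulr_suml big_mkcond /=.
  rewrite exchange_big /= !big_seq; apply: eq_bigr => m Hm.
  rewrite [RHS](bigD1 (Ordinal (ltK m Hm))) //= eqxx [X in _ + X]big1; last first.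
    by move=> j /negbTE Hj; rewrite eq_sym -(inj_eq val_inj) /= in Hj; rewrite Hj.
  rewrite addr0 mevalZ mevalX big_ord_recr /= -mulrA; congr (_ * (_ * _)).
    apply: eq_bigr => i _; rewrite /ext unlift_widen mnmE; congr (_ ^+ _).
    by congr (m _); apply/val_inj; rewrite /= /bump leqNgt ltn_ord.
  by rewrite /ext unlift_none.

have C2 (j : 'I_K) : c j = 0.
  apply: IH => x.
  pose Px : {poly R} := \poly_(j < K) (c j).@[x].
  have HP t : Px.[t] = 0 by rewrite horner_poly -C1 H.
  suff P0 : Px = 0.
    by have := congr1 (fun q : {poly R} => q`_j) P0; rewrite /= coef_poly ltn_ord coef0.
  apply/eqP/negPn/negP => nz.
  pose rs := [seq (i%:R : R) | i <- iota 0 (size Px)].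
  suff : (size rs < size Px)%N by rewrite size_map size_iota ltnn.
  apply: max_poly_roots nz _ _.
    by apply/allP => r _; rewrite /root HP.
  rewrite map_inj_uniq ?iota_uniq // => a b /eqP; rewrite eqr_nat => /eqP.
  done.
apply/mpolyP => m; rewrite mcoeff0.
apply/eqP/negPn/negP => nz.
have Hm : m \in msupp p by apply/negPn; rewrite -mcoeff_eq0.
have := C2 (Ordinal (ltK m Hm)).
move/(congr1 (mcoeff (res m))); rewrite mcoeff0 /c raddf_sum /= big_mkcond /=.
rewrite (bigD1_seq m) ?msupp_uniq //= eqxx mcoeffZ mcoeffX eqxx mulr1 big1_seq.
  by rewrite addr0 => /eqP; rewrite (negbTE nz).
move=> m' /andP[ne Hm']; case: ifP => // /eqP emax.
rewrite mcoeffZ mcoeffX; case: eqP => [er|]; last by rewrite mulr0.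
case/negP: ne; apply/eqP/mnmP => i.
case: (unliftP ord_max i) => [k ->|->]; last by [].
by have := congr1 (fun m0 : 'X_{1..n} => m0 k) er; rewrite /res !mnmE.
Qed.

Lemma X_mderivX (R : comNzRingType) n (k : 'I_n) (m : 'X_{1..n}) :
  ('X_k : {mpoly R[n]}) * mderiv k 'X_[m] = (m k)%:R *: 'X_[m].
Proof.
rewrite mderivX -scalerAr.
have [->|pos] := posnP (m k); first by rewrite !scale0r.
congr (_ *: _); rewrite -mpolyXD; congr 'X_[_].
apply/mnmP => i; rewrite mnmDE mnmBE mnm1E.
case: eqP => [<-|]; last by rewrite subn0.
by rewrite addnC subnK.
Qed.

Lemma euler_w (R : comNzRingType) n (w : 'I_n -> nat) (p : {mpoly R[n]}) d :
  (forall m, m \in msupp p -> (\sum_k w k * m k)%N = d) ->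
  \sum_(k < n) (w k)%:R *: ('X_k * mderiv k p) = d%:R *: p.
Proof.
move=> H; rewrite [in RHS](mpolyE p) scaler_sumr.
under eq_bigr => k _ do rewrite [in mderiv _ _](mpolyE p) (raddf_sum (mderiv k)) big_distrr /= scaler_sumr.
rewrite exchange_big /= !big_seq; apply: eq_bigr => m Hm.
under eq_bigr => k _ do rewrite mderivZ -scalerAr X_mderivX !scalerA.
rewrite -scaler_suml scalerA; congr (_ *: _).
rewrite -(H m Hm) natr_sum mulr_suml; apply: eq_bigr => k _.
by rewrite natrM mulrAC.
Qed.

Lemma injU (R : numClosedFieldType) n (H : {mpoly R[n]}) :
  (forall x, H.@[uvec x] = 0) -> H = 0.
Proof.
move=> HH; apply: msym_fundamental_un0; apply: mpoly_vanish => y.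
rewrite comp_mpoly_meval -(HH (fun k => sqrtC (y k))); apply: meval_eq => i.
rewrite tnth_mktuple /uvec ucoord_eval; apply: meval_eq => k.
by rewrite sqrtCK.
Qed.

Lemma injU' (R : numClosedFieldType) n (H : {mpoly R[n]}) :
  (forall x, (forall k, x k != 0) -> H.@[uvec x] = 0) -> H = 0.
Proof.
move=> HH; pose U := [tuple ucoord R k | k < n].
have E x : (H \mPo U).@[x] = H.@[uvec x].
  by rewrite comp_mpoly_meval; apply: meval_eq => i; rewrite tnth_mktuple.
have P0 : (H \mPo U) * \prod_(k < n) 'X_k = 0.
  apply: mpoly_vanish => x; rewrite mevalM (big_morph (meval x) (mevalM x) (meval1 x)).
  case: (boolP [forall k, x k != 0]) => [/forallP Hx|].
    by rewrite E HH // mul0r.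
  rewrite negb_forall => /existsP [k]; rewrite negbK => /eqP xk.
  by rewrite (bigD1 k) //= mevalXU xk mul0r mulr0.
have PN : \prod_(k < n) ('X_k : {mpoly R[n]}) != 0.
  rewrite prodf_seq_neq0; apply/allP => k _ /=.
  by apply/eqP => /(congr1 (mcoeff U_(k)%MM)); rewrite mcoeffX eqxx mcoeff0 => /eqP; rewrite oner_eq0.
apply: injU => x; rewrite -E.
by move/eqP: P0; rewrite mulf_eq0 (negbTE PN) orbF => /eqP ->; rewrite meval0.
Qed.

Lemma gexpr_scale (R : numClosedFieldType) n (x : 'I_n -> R) (s : R) (a b : 'I_n) :
  s != 0 -> (forall k, x k != 0) ->
  gexpr (fun k => s * x k) a b = s ^+ (2 * (a + b)) * gexpr x a b.
Proof.
move=> s0 x0; rewrite /gexpr mulr_sumr; apply: eq_bigr => k _.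
rewrite mulr_sumr; apply: eq_bigr => l _.
rewrite (@eval_scale _ _ _ _ s x (@homd_deriv _ _ _ _ k (@ucoord_homd R n a))).
rewrite (@eval_scale _ _ _ _ s x (@homd_deriv _ _ _ _ l (@ucoord_homd R n b))).
have E2 (c : nat) : (2 * c.+1).-1 = (2 * c).+1 by rewrite mulnS.
rewrite !E2 !exprS mulnDr exprD.
move: (x0 k) (x0 l) => xk xl.
field.
by rewrite xk xl s0.
Qed.

Lemma mderivXU (R : comNzRingType) n (i k : 'I_n) :
  mderiv k ('X_i : {mpoly R[n]}) = (i == k)%:R.
Proof.
rewrite mderivX mnm1E; case: eqP => [->|_]; last by rewrite scale0r.
have -> : (U_(k) - U_(k))%MM = 0%MM by apply/mnmP => j; rewrite mnmBE subnn mnm0E.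
by rewrite mpolyX0 scale1r.
Qed.

Theorem mainTheorem18 (R : numClosedFieldType) (n : nat) (hn : (2 <= n)%N)
  (F : 'I_n -> {mpoly R[n]}) (G : 'I_n -> 'I_n -> {mpoly R[n]}) :
  (forall (i : 'I_n) (p : 'I_n -> R), (F i).@[uvec p] = (Ep (ucoord R i)).@[p]) ->
  (forall (i j : 'I_n) (p : 'I_n -> R), (forall k, p k != 0) ->
     (G i j).@[uvec p] = gexpr p i j) ->
  let d : R := 1 - 2%:R / (n.-1)%:R in
  forall i j : 'I_n, lie_deriv2 F G i j = (d - 1) *: G i j.
Proof.
move=> HF HG d i j.
have n1 : (n.-1)%:R != 0 :> R by rewrite pnatr_eq0 -lt0n; case: n hn {HF HG F G d i j} => [|[|k]].
have two : 2%:R != 0 :> R by rewrite pnatr_eq0.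
pose c (k : 'I_n) : R := (k.+1)%:R / (n.-1)%:R.
have HF' k : F k = c k *: 'X_k.
  apply/eqP; rewrite -subr_eq0; apply/eqP; apply: injU => x.
  rewrite mevalB mevalZ mevalXU HF /uvec /Ep mevalZ.
  have E := @euler_w R n (fun _ => 1%N) (ucoord R k) (2 * k.+1).
  rewrite /= in E.
  have E' : \sum_(k0 < n) ('X_k0 * mderiv k0 (ucoord R k)) = (2 * k.+1)%:R *: ucoord R k.
    rewrite -E; last first.
      move=> m Hm; rewrite -(@ucoord_homd R n k m Hm) mdegE; apply: eq_bigr => l _; by rewrite mul1n.
    by apply: eq_bigr => l _; rewrite scale1r.
  rewrite E' mevalZ /c natrM.
  field.
  exact: n1.
have HGw (a b : 'I_n) (m : 'X_{1..n}) : m \in msupp (G a b) -> (\sum_(k < n) k.+1 * m k)%N = (a + b)%N.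
  pose s : R := 2%:R. pose t := s ^+ 2.
  pose T := [tuple (t ^+ k.+1) *: ('X_k : {mpoly R[n]}) | k < n].
  pose Gt := G a b \mPo T.
  have XT (m' : 'X_{1..n}) : 'X_[m'] \mPo T = t ^+ (mnmwgt m') *: 'X_[m'].
    rewrite comp_mpolyX.
    under eq_bigr => k _ do rewrite tnth_mktuple exprZn -exprM.
    rewrite scaler_prod prodrXr mpolyXE_id; congr (t ^+ _ *: _).
    by rewrite /mnmwgt; apply: eq_bigr => k _; rewrite mulnC.
  have coefGt : Gt@_m = t ^+ (mnmwgt m) * (G a b)@_m.
    rewrite /Gt comp_mpolyEX (raddf_sum (mcoeff m)) /=.
    under eq_bigr => m' _ do rewrite XT scalerA mcoeffZ mcoeffX.
    case: (boolP (m \in msupp (G a b))) => Hm.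
      rewrite (bigD1_seq m) ?msupp_uniq //= eqxx mulr1 big1_seq.
        by rewrite addr0 mulrC.
      by move=> m' /andP [ne _]; rewrite (negbTE ne) mulr0.
    rewrite big1_seq; first by rewrite memN_msupp_eq0 ?mulr0.
    move=> m' Hm'; case: eqP => [e|]; last by rewrite mulr0.
    by move: Hm; rewrite -e; case/andP: Hm' => _ ->.
  have GtE : Gt = t ^+ (a + b) *: G a b.
    apply/eqP; rewrite -subr_eq0; apply/eqP; apply: injU' => x x0.
    rewrite mevalB mevalZ /Gt comp_mpoly_meval.
    have -> : (G a b).@[fun k => (tnth T k).@[uvec x]] = (G a b).@[uvec (fun k => s * x k)].
      apply: meval_eq => k.
      by rewrite tnth_mktuple mevalZ mevalXU /uvec (@eval_scale _ _ _ _ s x (@ucoord_homd R n k)) /t -exprM.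
    rewrite HG; last by move=> k; rewrite mulf_neq0.
    by rewrite gexpr_scale // HG // /t -exprM subrr.
  move=> Hm; have := coefGt; rewrite GtE mcoeffZ => /esym/eqP.
  rewrite -subr_eq0 -mulrBl mulf_eq0.
  have -> : (G a b)@_m == 0 = false by apply/negbTE; rewrite mcoeff_eq0 Hm.
  rewrite orbF subr_eq0 => /eqP Et.
  have t1 : 1 < t by rewrite /t /s -natrX ltr1n.
  have : mnmwgt m = (a + b)%N.
    by apply/eqP; rewrite eqn_leq -!(ler_eXn2l t1) Et lexx.
  by rewrite /mnmwgt => <-; apply: eq_bigr => k _; rewrite mulnC.
have S1 (H : 'I_n -> {mpoly R[n]}) (l : 'I_n) (cc : R) :
    \sum_(k < n) H k * (cc *: (l == k)%:R) = cc *: H l.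
  rewrite (bigD1 l) //= eqxx big1 ?addr0; first by rewrite -scalerAr mulr1.
  by move=> k; rewrite eq_sym => /negbTE ->; rewrite scaler0 mulr0.
have S0 : \sum_(k < n) (c k *: 'X_k * mderiv k (G i j))
    = (n.-1)%:R^-1 *: \sum_(k < n) (k.+1)%:R *: ('X_k * mderiv k (G i j)).
  rewrite scaler_sumr; apply: eq_bigr => k _; rewrite -scalerAl scalerA /c mulrC.
  by [].
rewrite (@euler_w R n (fun k => k.+1) (G i j) (i + j)) in S0; last exact: HGw.
rewrite /lie_deriv2.
under eq_bigr => k _ do rewrite !HF' !mderivZ !mderivXU.
rewrite !sumrB S0 !S1 !scalerA -!scalerBl; congr (_ *: _).
rewrite /d /c -!natr1 natrD.
field.
exact: n1.
Qed.
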